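(* There exist an absolute constant $c>0$ and an infinite strictly increasing sequence of integer bases $(b_i)_{i\geq1}$, $b_i\ge 2$, such that $\overleftarrow{K}_{b_i}\geq c\log b_i$ for every $i$. In particular $\overleftarrow{K}_{b_i}\to\infty$ as $i\to\infty$.
   Context: For a base $b\ge2$ and a positive integer $n$ with $L$ digits in base $b$, $n=\sum_{0\leq i<L}\varepsilon_i(n)b^i$ ($\varepsilon_i(n)\in\{0,\dots,b-1\}$, $\varepsilon_{L-1}(n)\neq0$), its digital reverse is $\overleftarrow{n}=\sum_{0\leq i<L}\varepsilon_i(n)b^{L-1-i}$; a base-$b$ reversed prime is a number $\overleftarrow{p}$ with $p$ prime. $\overleftarrow{K}_b$ denotes the smallest integer $K$ such that every sufficiently large integer $N$ can be written as a sum of at most $K$ base-$b$ reversed primes, with $\overleftarrow{K}_b=\infty$ if no such $K$ exists. *)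

(* Defs.v *)
From mathcomp Require Import all_boot.
From Stdlib Require Import Reals.

(* Base-b digits of n, least significant first: eps_0(n), ..., eps_{L-1}(n).
   Uses fuel n (enough since each step divides by b >= 2). digits b 0 = [::]. *)
Fixpoint digits_aux (fuel b n : nat) : seq nat :=
  match fuel with
  | 0 => [::]
  | fuel'.+1 => if n == 0 then [::] else (n %% b) :: digits_aux fuel' b (n %/ b)
  end.

Definition digits (b n : nat) : seq nat := digits_aux n b n.

Definition of_digits (b : nat) (s : seq nat) : nat :=
  foldr (fun d acc => d + b * acc) 0 s.

Definition rev_digits (b n : nat) : nat := of_digits b (rev (digits b n)).

Definition reversed_prime (b m : nat) : Prop :=
  exists p : nat, prime p /\ m = rev_digits b p.

Definition sum_reversed_primes_bound (b K : nat) : Prop :=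
  exists N0 : nat, forall N : nat, N0 <= N ->
    exists s : seq nat, size s <= K /\ (forall m, m \in s -> reversed_prime b m)
                        /\ sumn s = N.

(* "K_b >= x" for real x, with K_b the least such K (or infinity if none):
   equivalently every admissible K satisfies x <= K. *)
Definition Krev_ge (b : nat) (x : R) : Prop :=
  forall K : nat, sum_reversed_primes_bound b K -> (x <= INR K)%R.

(* Main.v *)
Require Import Defs.
From mathcomp Require Import all_boot.
From Stdlib Require Import Reals.
From Stdlib Require Import Lra.
From mathcomp Require Import ssrnat.
From mathcomp Require Import zify.

Definition P (n : nat) := \prod_(0 <= p < n.+1 | prime p) p.

Lemma bin_pair n : forall k, 'C(n, k) + 'C(n, k.+1) <= 2 ^ n.
Proof.
elim: n => [|n IH] k.
  by case: k.
case: k => [|k].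
  rewrite bin0 binS bin0 expnS.
  have := IH 0; rewrite bin0.
  have : 1 <= 2 ^ n by rewrite expn_gt0.
  lia.
rewrite !binS expnS.
have := IH k; have := IH k.+1. lia.
Qed.

Lemma binC_bound m : 'C(m.*2.+1, m.+1) <= 4 ^ m.
Proof.
rewrite binS.
have := bin_pair m.*2 m.
have -> : 4 ^ m = 2 ^ m.*2 by rewrite -mul2n expnM.
lia.
Qed.

Lemma prod_primes_dvd a r X :
  (forall p, prime p -> a <= p < r -> p %| X) ->
  \prod_(a <= p < r | prime p) p %| X.
Proof.
elim: r => [|r IH] H.
  by rewrite big_geq.
case: (leqP a r) => har; last by rewrite big_geq.
rewrite big_mkcond big_nat_recr //= -big_mkcond.
case pr: (prime r); last first.
  rewrite muln1; apply: IH => p pp /andP[h1 h2]; apply: H => //; lia.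
rewrite Gauss_dvd.
  apply/andP; split.
    apply: IH => p pp /andP[h1 h2]; apply: H => //; lia.
  by apply: H => //; lia.
rewrite coprime_sym big_seq_cond.
apply: (big_ind (fun x => coprime r x)) => //.
- exact: coprimen1.
- by move=> x y hx hy; rewrite coprimeMr hx hy.
- move=> i /andP[]; rewrite mem_index_iota => /andP [h1 h2] pi.
  rewrite prime_coprime // dvdn_prime2 //; apply/eqP; lia.
Qed.

Lemma Q_dvd_bin m :
  \prod_(m.+2 <= p < m.*2.+2 | prime p) p %| 'C(m.*2.+1, m.+1).
Proof.
apply: prod_primes_dvd => p pp /andP[h1 h2].
have e : m.*2.+1 - m.+1 = m by lia.
have hf := @bin_fact m.*2.+1 m.+1 ltac:(lia).
rewrite e in hf.
have : p %| 'C(m.*2.+1, m.+1) * ((m.+1)`! * m`!).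
  rewrite hf.
  apply: dvdn_fact; have := prime_gt0 pp; lia.
rewrite Euclid_dvdM // Euclid_dvdM //.
have nd : forall k, k < p -> ~~ (p %| k`!).
  elim=> [|k IHk] hk; first by rewrite /= dvdn1; have := prime_gt1 pp; lia.
  rewrite factS Euclid_dvdM // negb_or IHk; last by lia.
  rewrite andbT; apply/negP => /dvdn_leq; lia.
rewrite (negbTE (nd m.+1 _)); last by lia.
rewrite (negbTE (nd m _)); last by lia.
by rewrite !orbF.
Qed.

Lemma P_split m : P m.*2.+1 = P m.+1 * \prod_(m.+2 <= p < m.*2.+2 | prime p) p.
Proof.
rewrite /P (@big_cat_nat _ _ _ m.+2) //; lia.
Qed.

Lemma P_pos n : 0 < P n.
Proof. rewrite /P big_mkcond; apply: prodn_gt0 => i /=; case pi: (prime i) => //; exact: prime_gt0. Qed.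

Lemma P_bound n : P n <= 4 ^ n.
Proof.
elim/ltn_ind: n => n IH.
case: n IH => [|[|[|n]]] IH; try by rewrite /P unlock.
case: (boolP (odd n)) => hn.
  have -> : P n.+3 = P n.+2.
    rewrite /P big_mkcond big_nat_recr //= -big_mkcond.
    have -> : prime n.+3 = false.
      apply/negP => pr.
      have : 2 %| n.+3 by rewrite dvdn2 /= !negbK.
      by rewrite dvdn_prime2.
    by rewrite muln1.
  apply: leq_trans (IH _ _) _ => //; rewrite leq_exp2l //.
have [m hm] : exists m, n.+3 = m.*2.+1.
  exists (n./2.+1); rewrite -[n in LHS]odd_double_half (negbTE hn) /=; lia.
rewrite hm P_split.
have h1 := IH m.+1 ltac:(lia).
have h0 : 0 < 'C(m.*2.+1, m.+1) by rewrite bin_gt0; lia.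
have h2 := dvdn_leq h0 (Q_dvd_bin m).
have h3 := binC_bound m.
have -> : 4 ^ m.*2.+1 = 4 ^ m.+1 * 4 ^ m by rewrite -expnD; congr (_ ^ _); lia.
apply: leq_mul => //; exact: leq_trans h2 h3.
Qed.

Lemma P_dvd q n : prime q -> q <= n -> q %| P n.
Proof.
move=> pq hq; rewrite /P big_mkcond (bigD1_seq q) /=.
- by rewrite pq dvdn_mulr.
- by rewrite mem_index_iota; lia.
- by rewrite iota_uniq andbT mem_iota.
Qed.

Lemma P_mono n : P n <= P n.+1.
Proof.
rewrite {2}/P big_mkcond big_nat_recr //= -big_mkcond.
case: (prime n.+1); last by rewrite muln1.
by rewrite leq_pmulr.
Qed.
Lemma of_digits_rcons b s x :
  of_digits b (rcons s x) = of_digits b s + b ^ (size s) * x.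
Proof.
elim: s => [|y s IH] /=; first by rewrite /of_digits /= muln0 addn0 mul1n.
rewrite /of_digits /= -/(of_digits b s) -/(of_digits b (rcons s x)) IH expnS.
lia.
Qed.

Lemma of_digits_lt b s : all (fun d => d < b) s -> of_digits b s < b ^ (size s).
Proof.
elim: s => [|y s IH] /=; first by [].
move=> /andP [hy hs]; have := IH hs.
rewrite /of_digits /= -/(of_digits b s) expnS.
move: (of_digits b s) (b ^ size s) => X B hX.
nia.
Qed.

Lemma digits_aux_lt f b n : 0 < b -> all (fun d => d < b) (digits_aux f b n).
Proof.
move=> hb; elim: f n => [|f IH] n //=.
case: (n == 0) => //=; rewrite ltn_pmod //; exact: IH.
Qed.

Lemma digits_pos b p : 0 < p ->
  digits b p = (p %% b) :: digits_aux p.-1 b (p %/ b).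
Proof. by case: p. Qed.

Lemma rev_small b p : 0 < p < b -> rev_digits b p = p.
Proof.
move=> /andP [h1 h2].
rewrite /rev_digits digits_pos // modn_small // divn_small //.
case: p h1 h2 => [|p] // _ _ /=.
by case: p => [|p] /=; rewrite /of_digits /= muln0 addn0.
Qed.

Lemma rev_shape b p : 0 < p -> 0 < b ->
  exists k R, R < b ^ k /\ rev_digits b p = R + b ^ k * (p %% b).
Proof.
move=> hp hb; rewrite /rev_digits digits_pos //.
set rest := digits_aux _ _ _.
exists (size rest), (of_digits b (rev rest)); split.
  rewrite -size_rev; apply: of_digits_lt; rewrite all_rev; exact: digits_aux_lt.
by rewrite rev_cons of_digits_rcons size_rev.
Qed.
Lemma key b n j p :
  2 <= n -> n < b -> 2 %| b -> (forall q, prime q -> q <= n -> q %| b) -> 0 < j ->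
  prime p -> rev_digits b p <= n * b ^ j -> rev_digits b p < 2 * b ^ j.
Proof.
move=> hn hnb h2 hq hj pp.
have hb : 0 < b by lia.
have hBj : b <= b ^ j by rewrite -{1}(expn1 b) leq_pexp2l //.
case: (ltnP p b) => hpb.
  rewrite rev_small; first by lia.
  by rewrite prime_gt0.
have [k [R [hR ->]]] := @rev_shape b p (prime_gt0 pp) hb.
set e := p %% b.
have he : e < b by rewrite ltn_pmod.
have hep : p = p %/ b * b + e by rewrite -divn_eq.
clearbody e.
have hcase : (e == 1) || (n < e).
  case: (boolP ((e == 1) || (n < e))) => // /norP [h1 h3].
  exfalso.
  have [q [qp qe qn]] : exists q, [/\ prime q, q %| e & q <= n].
    case: (posnP e) => e0.
      by exists 2; rewrite e0 dvdn0.
    exists (pdiv e); split.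
    - apply: pdiv_prime; lia.
    - exact: pdiv_dvd.
    - have := pdiv_leq e0; lia.
  have qp' : q %| p.
    rewrite hep dvdn_add // dvdn_mull //; exact: hq.
  move: qp'; rewrite dvdn_prime2 // => /eqP; lia.
have hbk : 0 < b ^ k by rewrite expn_gt0 hb.
case: (ltngtP k j) => hkj.
- have : b ^ k.+1 <= b ^ j by rewrite leq_pexp2l //; lia.
  rewrite expnS => h; move=> _.
  have : b ^ k * e.+1 <= b ^ k * b by rewrite leq_mul2l he orbT.
  move: (b ^ k) (b ^ j) h hR => Bk Bj; nia.
- have : b ^ j.+1 <= b ^ k by rewrite leq_pexp2l //; lia.
  rewrite expnS => h hle.
  exfalso.
  have e1 : 1 <= e by lia.
  have hh : b ^ k <= b ^ k * e by rewrite leq_pmulr.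
  move: (b ^ k) (b ^ j) h hle hBj hh => Bk Bj; nia.
- subst k => hle.
  move: (b ^ j) hR hle hbk => B; case/orP: hcase => [/eqP -> | he2]; nia.
Qed.
Lemma sumn_mem s m : m \in s -> m <= sumn s.
Proof.
elim: s => [|x s IH] //=; rewrite in_cons => /orP [/eqP -> | h]; first by rewrite leq_addr.
by apply: leq_trans (IH h) _; rewrite leq_addl.
Qed.

Lemma sumn_bound s B : (forall m, m \in s -> m <= B) -> sumn s <= size s * B.
Proof.
elim: s => [|x s IH] //= H.
rewrite mulSn leq_add //; first by apply: H; rewrite mem_head.
by apply: IH => m hm; apply: H; rewrite in_cons hm orbT.
Qed.

Definition bseq (i : nat) := P i.+2 * 2 ^ i.+2.

Lemma bseq_K i K : sum_reversed_primes_bound (bseq i) K -> i.+2 <= K.*2.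
Proof.
case=> N0 H.
have hbdef : bseq i = P i.+2 * 2 ^ i.+2 by [].
have hn2 : 2 <= i.+2 by [].
move: H hbdef hn2; move: (bseq i) => b; move: (i.+2) => n H hbdef hn2.
have hP := P_pos n.
have hPd : forall q, prime q -> q <= n -> q %| P n by move=> q qp qn; apply: P_dvd.
have hb4 : 4 <= b.
  rewrite hbdef; have : 4 <= 2 ^ n by rewrite (_ : 4 = 2 ^ 2) // leq_pexp2l.
  nia.
set j := N0.+1.
have hj : N0 < b ^ j.
  have := @ltn_expl b j ltac:(lia); rewrite /j; lia.
have [s [hs [hr hsum]]] := H (n * b ^ j) ltac:(nia).
have hall : forall m, m \in s -> m <= (2 * b ^ j).-1.
  move=> m hm; have [p [pp hmp]] := hr m hm; rewrite hmp.
  rewrite -ltnS prednK; last by rewrite muln_gt0 expn_gt0; apply/andP; split => //; apply/orP; left; lia.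
  apply: (@key b n j p) => //.
  - have : n < 2 ^ n by apply: ltn_expl.
    rewrite hbdef; nia.
  - rewrite hbdef; apply: dvdn_mull; rewrite (_ : n = (n - 1).+1); last lia.
    by rewrite expnS dvdn_mulr.
  - by move=> q qp qn; rewrite hbdef dvdn_mulr // hPd.
  - by rewrite -hmp -hsum sumn_mem.
have := @sumn_bound s (2 * b ^ j).-1 hall; rewrite hsum.
have hB : 0 < b ^ j by rewrite expn_gt0; lia.
move: (b ^ j) hB => B hB hh.
have h3 : size s * (2 * B).-1 <= K * (2 * B).-1 by rewrite leq_mul2r hs orbT.
have h1 : ((2 * B).-1).+1 = 2 * B by rewrite prednK //; lia.
move: ((2 * B).-1) h1 hh h3 => C h1 hh h3.
rewrite leqNgt; apply/negP => hc.
have h4 : (K.*2).+1 * B <= n * B by rewrite leq_mul2r hc orbT.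
have h5 : K * C.+1 = K * (2 * B) by rewrite h1.
rewrite mulnS in h5.
rewrite -muln2 mulSn in h4.
have h6 : K * 2 * B = K * (2 * B) by rewrite mulnA.
move: h4 h5 h6 hh h3 hB; move: (K * 2 * B) (K * (2 * B)) (K * C) (n * B) (size s * C) => x y z w v; lia.
Qed.
Lemma INR_expn m n : INR (m ^ n) = (INR m ^ n)%R.
Proof.
elim: n => [|n IH]; first by rewrite expn0.
by rewrite expnS mulnE mult_INR IH /=.
Qed.

Lemma ln8_lt3 : (ln 8 < 3)%R.
Proof.
have h : (2 < exp 1)%R by have := exp_ineq1 1 ltac:(lra); lra.
have h3 : exp 3 = (exp 1 * exp 1 * exp 1)%R by rewrite -!exp_plus; congr exp; lra.
rewrite -[X in (_ < X)%R](ln_exp 3).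
apply: ln_increasing; first lra.
rewrite h3.
have : (2 * 2 < exp 1 * exp 1)%R by apply: Rmult_le_0_lt_compat; lra.
nra.
Qed.

Lemma real_part (b n K : nat) : 0 < b -> b <= 8 ^ n -> n <= K.*2 ->
  (/ 6 * ln (INR b) <= INR K)%R.
Proof.
move=> hb hbn hnK.
have hb' : (0 < INR b)%R by apply: lt_0_INR; apply/ltP.
have h1 : (INR b <= INR 8 ^ n)%R by rewrite -INR_expn; apply: le_INR; apply/leP.
have e8 : INR 8 = 8%R by rewrite INR_IZR_INZ.
rewrite e8 in h1.
have h2 : (ln (INR b) <= INR n * ln 8)%R.
  rewrite -ln_pow; last lra.
  case: (Rle_lt_or_eq_dec _ _ h1) => h; last by rewrite h; apply: Req_le.
  by apply: Rlt_le; apply: ln_increasing.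
have h3 : (INR n <= 2 * INR K)%R.
  have : (INR n <= INR K.*2)%R by apply: le_INR; apply/leP.
  by rewrite -muln2 mulnE mult_INR /= ; lra.
have h4 := ln8_lt3.
have h5 : (0 <= INR n)%R by apply: pos_INR.
nra.
Qed.

Theorem theorem6p5 :
  exists (c : R) (bs : nat -> nat),
    (0 < c)%R /\
    (forall i, 2 <= bs i) /\
    (forall i, bs i < bs i.+1) /\
    (forall i, Krev_ge (bs i) (c * ln (INR (bs i)))%R).
Proof.
exists (/ 6)%R, bseq; split; first lra.
have hb : forall i, 4 <= bseq i.
  move=> i; rewrite /bseq; have := P_pos i.+2.
  have : 4 <= 2 ^ i.+2 by rewrite (_ : 4 = 2 ^ 2) // leq_pexp2l.
  nia.
split; first by move=> i; have := hb i; lia.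
split.
  move=> i; rewrite /bseq.
  have := P_mono i.+2; have := P_pos i.+2.
  rewrite (expnS 2 i.+2).
  move: (P i.+2) (P i.+3) (2 ^ i.+2) (expn_gt0 2 i.+2) => x y z hz; nia.
move=> i K HK.
apply: (@real_part (bseq i) i.+2 K).
- by have := hb i; lia.
- rewrite /bseq (_ : 8 = 4 * 2) // expnMn leq_mul2r P_bound orbT //.
- exact: bseq_K.
Qed.
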